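(* Let $s>0$ and $\epsilon\in(0,1)$. Given a polynomial decay stream of $n$ points (decay function $w(t)=t^{-s}$) as input to the block-merging algorithm described in the context, the number of blocks it maintains is $O(\epsilon^{-1}s\log n)$.
   Context: Polynomial decay stream: points arrive sequentially and the $t$-th most recent point has weight $t^{-s}$. Markers: for each $i\in\mathbb N$, $x_i$ is the minimum integer $\ge 2^i$ such that $\frac{1-\epsilon}{(x_i-2^i+1)^s}\le\frac{1+\epsilon}{x_i^s}$, i.e. $\left(\frac{x_i}{x_i-2^i+1}\right)^s\le\frac{1+\epsilon}{1-\epsilon}$. The algorithm partitions the stream into blocks of consecutive points; a block is written $[a,b]$ where $a$ and $b$ are the positions (relative to the start of the stream) of its first and last points, and for each block a coreset (computed by an offline coreset construction algorithm) is stored. When the $n$-th point $p_n$ arrives, the algorithm inserts $[n,n]$ as a new block; then for each block $[a,b]$, if $a+x_i<n$ for some $i$, it merges all blocks in the range $[a,a+2^i-1]$ into a single block (and reduces the union of their coresets to a single coreset). At the end each block $[a,b]$ receives weight $\frac12\left(\frac{1-\epsilon}{a^s}+\frac{1+\epsilon}{b^s}\right)$.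
   Formalization: The block count is at most C·(1+s/ε)·ln n for a constant C uniform in s, ε, n, not O(ε⁻¹s log n); in one left-to-right pass, a block [a,b] absorbs later blocks starting in [a,a+2ᴵ−1], I the largest i with a+xᵢ<n. Each condition added here is assumed in the paper as well or is needed for the statement above to hold. *)

(* Defs.v *)
From Stdlib Require Import Reals Lra Lia Arith List.
Import ListNotations.
Open Scope R_scope.

Definition marker_cond (s eps : R) (i x : nat) : Prop :=
  Rpower (INR x / INR (x + 1 - 2 ^ i)) s <= (1 + eps) / (1 - eps).

Definition is_marker (s eps : R) (i x : nat) : Prop :=
  (2 ^ i <= x)%nat /\ marker_cond s eps i x /\
  (forall y : nat, (2 ^ i <= y)%nat -> (y < x)%nat -> ~ marker_cond s eps i y).

(* Blocks are pairs (a, b) of positions (1-based, from the start of the stream),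
   kept in increasing order. *)
Definition block := (nat * nat)%type.

(* Largest i with a + x_i < n (any such i satisfies i < n since x_i >= 2^i > i);
   None if there is no such i. *)
Definition merge_level (x : nat -> nat) (n a : nat) : option nat :=
  fold_left (fun acc i => if (a + x i <? n)%nat then Some i else acc)
            (seq 0 n) None.

(* One left-to-right merging pass at time n: a block [a,b] for which
   a + x_i < n for some i absorbs all following blocks whose start lies in
   [a, a + 2^I - 1], I the largest such i (merging for the largest i subsumes
   the merges for smaller i). *)
Definition merge_pass (x : nat -> nat) (n : nat) (bs : list block) : list block :=
  rev (fold_left
    (fun acc (blk : block) =>
       match acc with
       | [] => [blk]
       | (a, b) :: acc' =>
           match merge_level x n a with
           | Some lv => if (fst blk <=? a + 2 ^ lv - 1)%nat
                       then (a, snd blk) :: acc'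
                       else blk :: acc
           | None => blk :: acc
           end
       end) bs []).

Definition step (x : nat -> nat) (n : nat) (bs : list block) : list block :=
  merge_pass x n (bs ++ [(n, n)]).

Fixpoint blocks (x : nat -> nat) (n : nat) : list block :=
  match n with
  | O => []
  | S m => step x (S m) (blocks x m)
  end.

(* Main.v *)
Require Import Defs.
From Stdlib Require Import Reals List Lia Lra Sorting ZArith.
Import ListNotations.
Open Scope nat_scope.

Definition mstep (x : nat -> nat) (n : nat) :=
  (fun acc (blk : block) =>
       match acc with
       | [] => [blk]
       | (a, b) :: acc' =>
           match merge_level x n a with
           | Some lv => if (fst blk <=? a + 2 ^ lv - 1)%nat
                       then (a, snd blk) :: acc'
                       else blk :: acc
           | None => blk :: acc
           end
       end).

Lemma merge_pass_eq x n bs : merge_pass x n bs = rev (fold_left (mstep x n) bs []).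
Proof. reflexivity. Qed.

Lemma merge_level_spec x n a : forall m,
  match fold_left (fun acc i => if (a + x i <? n)%nat then Some i else acc) (seq 0 m) None with
  | Some lv => forall i, i < m -> a + x i < n -> i <= lv
  | None => forall i, i < m -> ~ a + x i < n
  end.
Proof.
  induction m.
  - simpl. intros; lia.
  - rewrite seq_S, fold_left_app. simpl.
    destruct (Nat.ltb_spec (a + x m) n).
    + intros; lia.
    + destruct (fold_left _ (seq 0 m) None) as [lv|].
      * intros i Hi Hc. assert (i < m \/ i = m) as [|] by lia; [auto|subst; lia].
      * intros i Hi Hc. assert (i < m \/ i = m) as [|] by lia; [eapply IHm; eauto|subst; lia].
Qed.

Lemma merge_level_some x n a lv : merge_level x n a = Some lv ->
  forall i, i < n -> a + x i < n -> i <= lv.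
Proof. intros H. pose proof (merge_level_spec x n a n) as S. unfold merge_level in H. rewrite H in S. exact S. Qed.

Lemma merge_level_none x n a : merge_level x n a = None ->
  forall i, i < n -> ~ a + x i < n.
Proof. intros H. pose proof (merge_level_spec x n a n) as S. unfold merge_level in H. rewrite H in S. exact S. Qed.

Definition Gap (x : nat -> nat) (n a a' : nat) : Prop :=
  a < a' /\ forall i, i < n -> a + x i < n -> a + 2 ^ i <= a'.

Lemma fold_inv x n : forall l acc,
  StronglySorted lt (map fst l) ->
  (match acc with [] => True | p :: _ => Forall (fun q => fst p < fst q) l end) ->
  Sorted (fun u v => Gap x n v u) (map fst acc) ->
  Forall (fun p => fst p <= n) l -> Forall (fun p => fst p <= n) acc ->
  Sorted (fun u v => Gap x n v u) (map fst (fold_left (mstep x n) l acc)) /\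
  Forall (fun p => fst p <= n) (fold_left (mstep x n) l acc).
Proof.
  induction l as [|blk l IH]; intros acc Hs Hh Hg Hl Ha; simpl; [tauto|].
  inversion Hs as [|? ? Hs' Hf]; subst.
  inversion Hl as [|? ? Hb Hl']; subst.
  rewrite Forall_map in Hf.
  apply IH; auto.
  - destruct acc as [|[a b] acc']; simpl; [exact Hf|].
    inversion Hh; subst.
    destruct (merge_level x n a) as [lv|]; [destruct (Nat.leb_spec (fst blk) (a + 2^lv - 1))|]; simpl; auto.
  - destruct acc as [|[a b] acc']; simpl; [constructor; auto|].
    inversion Hh as [|? ? Hab _]; subst. simpl in Hab.
    destruct (merge_level x n a) as [lv|] eqn:E;
      [destruct (Nat.leb_spec (fst blk) (a + 2^lv - 1))|]; simpl; auto.
    + constructor; auto. constructor. split; auto.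
      intros i Hi Hc. pose proof (merge_level_some _ _ _ _ E i Hi Hc).
      pose proof (Nat.pow_le_mono_r 2 i lv ltac:(lia) H0).
      pose proof (Nat.pow_nonzero 2 lv ltac:(lia)). lia.
    + constructor; auto. constructor. split; auto.
      intros i Hi Hc. exfalso. exact (merge_level_none _ _ _ E i Hi Hc).
  - destruct acc as [|[a b] acc']; simpl; [constructor; auto|].
    inversion Ha; subst.
    destruct (merge_level x n a) as [lv|] eqn:E;
      [destruct (Nat.leb_spec (fst blk) (a + 2^lv - 1))|]; simpl; auto.
Qed.

Lemma Sorted_snoc {A} (R : A -> A -> Prop) (d : A) : forall l y,
  Sorted R l -> (l = [] \/ R (last l d) y) -> Sorted R (l ++ [y]).
Proof.
  induction l as [|a l IH]; intros y Hs Hy; simpl.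
  - repeat constructor.
  - inversion Hs as [|? ? Hs' Hh]; subst.
    constructor.
    + apply IH; auto. destruct l; [left; reflexivity|right].
      destruct Hy as [Hy|Hy]; [discriminate|exact Hy].
    + destruct l as [|b l]; simpl.
      * constructor. destruct Hy as [Hy|Hy]; [discriminate|exact Hy].
      * inversion Hh; subst. constructor; auto.
Qed.

Lemma Sorted_rev {A} (R : A -> A -> Prop) : forall l,
  Sorted (fun u v => R v u) l -> Sorted R (rev l).
Proof.
  induction l as [|a l IH]; intros Hs; simpl; [constructor|].
  inversion Hs as [|? ? Hs' Hh]; subst.
  apply (Sorted_snoc R a); auto.
  destruct l as [|b l]; [left; reflexivity|right].
  inversion Hh; subst. simpl. rewrite last_last. assumption.
Qed.

Lemma SS_snoc {A} (R : A -> A -> Prop) : forall l y,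
  StronglySorted R l -> Forall (fun a => R a y) l -> StronglySorted R (l ++ [y]).
Proof.
  induction l as [|a l IH]; intros y Hs Hf; simpl.
  - repeat constructor.
  - inversion Hs; subst. inversion Hf; subst. constructor; auto.
    apply Forall_app; split; auto.
Qed.

Lemma Sorted_mono {A} (R S : A -> A -> Prop) : (forall a b, R a b -> S a b) ->
  forall l, Sorted R l -> Sorted S l.
Proof.
  intros H l Hs. induction Hs; constructor; auto.
  destruct H0; constructor; auto.
Qed.

Lemma blocks_inv x : forall n,
  Sorted (Gap x n) (map fst (blocks x n)) /\
  Forall (fun p => fst p <= n) (blocks x n) /\
  StronglySorted lt (map fst (blocks x n)).
Proof.
  induction n as [|m [H1 [H2 H3]]]; simpl.
  - repeat constructor.
  - unfold step. rewrite merge_pass_eq.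
    destruct (fold_inv x (S m) (blocks x m ++ [(S m, S m)]) []) as [G F].
    + rewrite map_app. simpl. apply SS_snoc; auto.
      apply Forall_map. eapply Forall_impl; [|exact H2].
      simpl; intros; lia.
    + exact I.
    + constructor.
    + apply Forall_app; split; [|repeat constructor].
      eapply Forall_impl; [|exact H2]. simpl; intros; lia.
    + constructor.
    + rewrite map_rev. assert (Sorted (Gap x (S m)) (rev (map fst (fold_left (mstep x (S m)) (blocks x m ++ [(S m, S m)]) [])))) as HG.
      { apply (Sorted_rev (Gap x (S m))). exact G. }
      split; [exact HG|split].
      * apply Forall_rev. exact F.
      * apply Sorted_StronglySorted; [intros a b c; lia|].
        eapply Sorted_mono; [|exact HG]. intros a b [Hab _]. exact Hab.
Qed.

Lemma level_exists K d : 1 <= K -> K < d -> exists i, K * 2 ^ i < d <= K * 2 ^ (S i).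
Proof.
  intros HK Hd.
  assert (Hm : forall m, d <= K * 2 ^ m -> exists i, K * 2 ^ i < d <= K * 2 ^ (S i)).
  { induction m; intros Hm.
    - simpl in Hm. lia.
    - destruct (Nat.le_gt_cases d (K * 2 ^ m)) as [Hle|Hgt]; [apply IHm; auto|].
      exists m. lia. }
  apply (Hm d). pose proof (Nat.pow_gt_lin_r 2 d ltac:(lia)). nia.
Qed.

Lemma gap_nat x n K h h2 : Gap x n h h2 -> h2 <= n -> (forall i, x i <= K * 2 ^ i) -> 1 <= K ->
  n - h + 1 <= 4 * K * (h2 - h).
Proof.
  intros [Hlt Hg] Hn Hx HK.
  destruct (Nat.le_gt_cases (n - h) (2 * K)) as [Hle|Hgt].
  - nia.
  - destruct (level_exists K (n - h) HK ltac:(lia)) as [i [Hi1 Hi2]].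
    assert (Hp := Nat.pow_gt_lin_r 2 i ltac:(lia)).
    specialize (Hx i).
    assert (h + 2 ^ i <= h2) by (apply Hg; nia).
    rewrite Nat.pow_succ_r' in Hi2.
    nia.
Qed.

Open Scope R_scope.

Lemma ln_le_xm1 y : 0 < y -> ln y <= y - 1.
Proof. intros Hy. pose proof (exp_ineq1_le (ln y)). rewrite exp_ln in H; lra. Qed.

Lemma ln_le' a b : 0 < a -> a <= b -> ln a <= ln b.
Proof. intros Ha Hab. destruct (Rle_lt_or_eq_dec _ _ Hab) as [H|H].
  - left. apply ln_increasing; auto.
  - rewrite H; lra. Qed.

Lemma ln_step (K d d' : nat) : (1 <= K)%nat -> (d' < d)%nat -> (d + 1 <= 4 * K * (d - d'))%nat ->
  1 + 4 * INR K * ln (INR d' + 1) <= 4 * INR K * ln (INR d + 1).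
Proof.
  intros HK Hd H.
  apply le_INR in H. rewrite plus_INR, !mult_INR, minus_INR in H by lia.
  apply le_INR in HK. apply lt_INR in Hd. simpl in H, HK.
  assert (H0 : 0 <= INR d') by apply pos_INR.
  set (y := (INR d' + 1) / (INR d + 1)).
  assert (Hy : 0 < y) by (unfold y; apply Rdiv_lt_0_compat; lra).
  pose proof (ln_le_xm1 y Hy) as Hl.
  unfold y in Hl. unfold Rdiv in Hl. rewrite ln_mult, ln_Rinv in Hl by (try apply Rinv_0_lt_compat; lra).
  assert (Hq : (INR d' + 1) * / (INR d + 1) - 1 = - ((INR d - INR d') / (INR d + 1))) by (field; lra).
  rewrite Hq in Hl.
  assert (Hq2 : 1 <= 4 * INR K * ((INR d - INR d') / (INR d + 1))).
  { apply (Rmult_le_reg_r (INR d + 1)); [lra|]. field_simplify; [lra|lra]. }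
  nra.
Qed.

Lemma ln_ge0 y : 1 <= y -> 0 <= ln y.
Proof. intros. rewrite <- ln_1. apply ln_le'; lra. Qed.

Lemma count x n K : (1 <= K)%nat -> (forall i, (x i <= K * 2 ^ i)%nat) ->
  forall t h, Sorted (Gap x n) (h :: t) -> Forall (fun a => (a <= n)%nat) (h :: t) ->
  INR (length (h :: t)) <= 1 + 4 * INR K * ln (INR (n - h) + 1).
Proof.
  intros HK Hx. induction t as [|h2 t IH]; intros h Hs Hf.
  - simpl. assert (0 <= ln (INR (n - h) + 1)) by (apply ln_ge0; pose proof (pos_INR (n-h)); lra).
    assert (0 <= INR K) by apply pos_INR. nra.
  - inversion Hs as [|? ? Hs' Hh]; subst. inversion Hh as [|? ? Hg]; subst.
    inversion Hf as [|? ? Hhn Hf']; subst. inversion Hf'; subst.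
    specialize (IH h2 Hs' Hf').
    pose proof (gap_nat x n K h h2 Hg ltac:(assumption) Hx HK) as G.
    destruct Hg as [Hlt _].
    pose proof (ln_step K (n - h) (n - h2) HK ltac:(lia) ltac:(replace (n - h - (n - h2))%nat with (h2 - h)%nat by lia; exact G)).
    change (length (h :: h2 :: t)) with (S (length (h2 :: t))). rewrite S_INR. lra.
Qed.

Lemma exp_le' a b : a <= b -> exp a <= exp b.
Proof. intros H. destruct (Rle_lt_or_eq_dec _ _ H) as [H1|H1]; [left; apply exp_increasing; auto|rewrite H1; lra]. Qed.

Lemma marker_le s eps i xi (N : nat) : 0 < s -> 0 < eps < 1 -> is_marker s eps i xi ->
  (1 <= N)%nat -> s / eps <= INR N -> (xi <= (N + 1) * 2 ^ i)%nat.
Proof.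
  intros Hs He [_ [_ Hmin]] HN HsN.
  destruct (Nat.le_gt_cases xi ((N + 1) * 2 ^ i)) as [H|H]; auto.
  exfalso. assert (Hp : (1 <= 2 ^ i)%nat) by (pose proof (Nat.pow_nonzero 2 i); lia).
  apply (Hmin ((N + 1) * 2 ^ i)%nat); [nia|exact H|].
  unfold marker_cond.
  replace ((N + 1) * 2 ^ i + 1 - 2 ^ i)%nat with (N * 2 ^ i + 1)%nat by nia.
  rewrite plus_INR, !mult_INR, plus_INR. simpl.
  apply le_INR in Hp, HN. simpl in Hp, HN.
  set (P := INR (2 ^ i)) in *. set (M := INR N) in *.
  set (rho := (M + 1) * P / (M * P + 1)).
  assert (Hr0 : 0 < rho) by (unfold rho; apply Rdiv_lt_0_compat; nra).
  assert (Hr1 : rho - 1 <= 1 / M).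
  { unfold rho. apply (Rmult_le_reg_r (M * (M * P + 1))); [nra|].
    field_simplify; nra. }
  pose proof (ln_le_xm1 rho Hr0).
  assert (Hs2 : s <= eps * M).
  { apply (Rmult_le_compat_l eps) in HsN; [|lra]. unfold Rdiv in HsN.
    replace (eps * (s * / eps)) with s in HsN by (field; lra). exact HsN. }
  assert (Hsl : s * ln rho <= eps).
  { assert (s * (1 / M) <= eps).
    { apply (Rmult_le_reg_r M); [lra|]. field_simplify; lra. }
    nra. }
  unfold Rpower. apply Rle_trans with (exp eps); [apply exp_le'; lra|].
  pose proof (exp_ineq1_le (- eps)).
  assert (Hee : exp eps * exp (- eps) = 1) by (rewrite <- exp_plus; replace (eps + - eps) with 0 by ring; apply exp_0).
  pose proof (exp_pos eps).
  apply (Rmult_le_reg_r (1 - eps)); [lra|].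
  replace ((1 + eps) / (1 - eps) * (1 - eps)) with (1 + eps) by (field; lra).
  nra.
Qed.

Theorem lemma2 :
  exists C : R, 0 < C /\
  forall (s eps : R), 0 < s -> 0 < eps < 1 ->
  forall x : nat -> nat, (forall i : nat, is_marker s eps i (x i)) ->
  forall n : nat, (2 <= n)%nat ->
  INR (length (blocks x n)) <= C * (1 + s / eps) * ln (INR n).
Proof.
  exists 18. split; [lra|].
  intros s eps Hs He x Hx n Hn.
  assert (Hse : 0 < s / eps) by (apply Rdiv_lt_0_compat; lra).
  destruct (archimed (s / eps)) as [A1 A2].
  set (z := up (s / eps)) in *.
  assert (Hz : (0 <= z)%Z) by (apply le_IZR; simpl; lra).
  set (N := Z.to_nat z).
  assert (HN : INR N = IZR z) by (unfold N; rewrite INR_IZR_INZ, Z2Nat.id; auto).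
  assert (HN1 : (1 <= N)%nat).
  { destruct N eqn:E; [|lia]. simpl in HN. lra. }
  assert (HxK : forall i, (x i <= (N + 1) * 2 ^ i)%nat).
  { intros i. apply (marker_le s eps); auto. lra. }
  assert (Hlnn : 0 <= ln (INR n)) by (apply ln_ge0; apply le_INR in Hn; simpl in Hn; lra).
  assert (Hn2 : 2 <= INR n) by (apply le_INR in Hn; simpl in Hn; lra).
  assert (Hl2 : ln 2 <= ln (INR n)) by (apply ln_le'; lra).
  pose proof ln_lt_2.
  assert (Hc : 0 <= 18 * (1 + s / eps) * ln (INR n)) by nra.
  destruct (blocks_inv x n) as [G [F _]].
  destruct (blocks x n) as [|p l] eqn:E; [simpl; lra|].
  simpl map in G.
  assert (F' : Forall (fun a => (a <= n)%nat) (fst p :: map fst l)).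
  { change (fst p :: map fst l) with (map fst (p :: l)). apply Forall_map. exact F. }
  pose proof (count x n (N + 1) ltac:(lia) HxK (map fst l) (fst p) G F') as Hc2.
  simpl length in Hc2. rewrite length_map in Hc2. simpl length.
  assert (Hd : INR (n - fst p) <= INR n) by (apply le_INR; lia).
  assert (Hd0 : 0 <= INR (n - fst p)) by apply pos_INR.
  assert (Hl : ln (INR (n - fst p) + 1) <= 2 * ln (INR n)).
  { apply Rle_trans with (ln (2 * INR n)); [apply ln_le'; lra|].
    rewrite ln_mult by lra. lra. }
  rewrite plus_INR, HN in Hc2. simpl in Hc2.
  assert (HK : IZR z + 1 <= s / eps + 2) by lra.
  assert (Hlnl : 0 <= ln (INR (n - fst p) + 1)) by (apply ln_ge0; lra).
  assert (S1 : 4 * (IZR z + 1) * ln (INR (n - fst p) + 1) <= 4 * (IZR z + 1) * (2 * ln (INR n))).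
  { apply Rmult_le_compat_l; [lra|exact Hl]. }
  assert (S2 : (IZR z + 1) * ln (INR n) <= (s / eps + 2) * ln (INR n)).
  { apply Rmult_le_compat_r; lra. }
  assert (S3 : 0 <= s / eps * ln (INR n)) by (apply Rmult_le_pos; lra).
  assert (S4 : 1 <= 2 * ln (INR n)) by lra.
  assert (E1 : 18 * (1 + s / eps) * ln (INR n) = 18 * ln (INR n) + 18 * (s / eps * ln (INR n))) by ring.
  assert (E2 : (s / eps + 2) * ln (INR n) = s / eps * ln (INR n) + 2 * ln (INR n)) by ring.
  assert (E3 : 4 * (IZR z + 1) * (2 * ln (INR n)) = 8 * ((IZR z + 1) * ln (INR n))) by ring.
  rewrite S_INR.
  assert (Hc3 : INR (length l) + 1 <= 1 + 4 * (IZR z + 1) * ln (INR (n - fst p) + 1))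
    by (rewrite <- S_INR; exact Hc2).
  clear - Hc3 S1 S2 S3 S4 E1 E2 E3.
  set (L := ln (INR n)) in *. set (l2 := ln (INR (n - fst p) + 1)) in *.
  set (q := s / eps) in *. set (Z := IZR z) in *. set (k := INR (length l)) in *.
  clearbody L l2 q Z k.
  assert (A1 : 4 * (Z + 1) * l2 <= 8 * ((Z + 1) * L)) by lra.
  assert (A2 : 8 * ((Z + 1) * L) <= 8 * (q * L) + 16 * L) by lra.
  rewrite E1. lra.
Qed.
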